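(* Let $\psi$ be a saturation with saturation level $\alpha>0$ and $\mathbf{u}:[0,L]\to\mathbb{R}^P$ a given velocity. Fix $n$ and suppose $\boldsymbol{\rho}_i^n\ge0$ entry-wise and $\sigma_i^n\le\alpha$ for all $i=1,\dots,M$. If $(\boldsymbol{\rho}_i^{n+1})_{i=1}^M\subset\mathbb{R}^P$ satisfies the implicit scheme $$\frac{\boldsymbol{\rho}_i^{n+1}-\boldsymbol{\rho}_i^n}{\Delta t}+\frac{\mathbf{F}_{i+1/2}^{n+1}-\mathbf{F}_{i-1/2}^{n+1}}{\Delta x}=0,\quad \mathbf{F}_{i+1/2}^{n+1}=\mathrm{diag}(\boldsymbol{\rho}_i^{n+1})(\psi_{i+1}^{n+1})^+\mathbf{u}_{i+1/2}^++\mathrm{diag}(\boldsymbol{\rho}_{i+1}^{n+1})(\psi_i^{n+1})^+\mathbf{u}_{i+1/2}^-,$$ with $\psi_i^n=\psi(\sigma_i^n)$, $\sigma_i^n=\sum_{p=1}^P(\boldsymbol{\rho}_i^n)_p$, $\mathbf{u}_{i+1/2}=\mathbf{u}(x_{i+1/2})$, and no-flux boundary conditions $\mathbf{F}_{1/2}^{n+1}=\mathbf{F}_{M+1/2}^{n+1}=0$, then $\boldsymbol{\rho}_i^{n+1}\ge0$ entry-wise and $\sigma_i^{n+1}\le\alpha$ for all $i$, unconditionally (for any $\Delta t,\Delta x>0$).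
   Context: A saturation is a continuous function $\psi:[0,\infty)\to\mathbb{R}$ that is non-increasing and for which there is $\alpha>0$ (the saturation level) with $\psi(\alpha)=0$ and $(\alpha-s)\psi(s)>0$ for $s\neq\alpha$. Discretisation of $(0,L)$: $\Delta x=L/M$, cells with centres $x_i=\Delta x(i-1/2)$ and interfaces $x_{i+1/2}$; $\boldsymbol{\rho}_i^n\in\mathbb{R}^P$ is the vector of species densities on cell $i$ at time $t^n$. $\mathrm{diag}(\mathbf{v})$ is the diagonal matrix with the entries of $\mathbf{v}$; $(\cdot)^+=\max\{\cdot,0\}$ and $(\cdot)^-=\min\{\cdot,0\}$, applied entry-wise to vectors. (This is a scheme for $\partial_t\boldsymbol{\rho}+\partial_x(\mathrm{diag}(\boldsymbol{\rho})\psi(\sigma)\mathbf{u})=0$.) *)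

(* Defs.v *)
From HB Require Import structures.
From mathcomp Require Import all_boot all_order all_algebra.
From mathcomp Require Import all_classical all_reals all_analysis.
Set Implicit Arguments. Unset Strict Implicit. Unset Printing Implicit Defensive.
Import Order.TTheory GRing.Theory Num.Theory.
Import numFieldNormedType.Exports.
Local Open Scope classical_set_scope.
Local Open Scope ring_scope.

(* A saturation psi : [0,oo) -> R with saturation level alpha.
   psi is given as a total function R -> R; only its restriction to [0,oo)
   is constrained. *)
Definition saturation (R : realType) (psi : R -> R) (alpha : R) : Prop :=
  [/\ {within [set x : R | 0 <= x], continuous psi},
      (forall s t : R, 0 <= s -> s <= t -> psi t <= psi s),
      0 < alpha,
      psi alpha = 0 &
      (forall s : R, 0 <= s -> s != alpha -> 0 < (alpha - s) * psi s)].

Definition ppart (R : realType) (x : R) : R := Num.max x 0.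
Definition npart (R : realType) (x : R) : R := Num.min x 0.

(* Cells are indexed 0-based: cell i (0 <= i < M) is the paper's cell i+1,
   with centre (i + 1/2) dx.  rho i p = density of species p in cell i. *)
Definition sigma (R : realType) (P : nat) (rho : nat -> 'I_P -> R) (i : nat) : R :=
  \sum_(p < P) rho i p.

(* Numerical flux at interface k (position k * dx), 0 <= k <= M; interface k
   is the paper's interface x_{k+1/2} in 1-based cell numbering shifted by one, i.e. lies between (0-based) cells k-1 and k.
   No-flux boundary conditions: flux is 0 at k = 0 and k = M. *)
Definition flux (R : realType) (P : nat) (psi : R -> R) (u : R -> 'I_P -> R)
    (dx : R) (M : nat) (rho : nat -> 'I_P -> R) (k : nat) (p : 'I_P) : R :=
  if (0 < k < M)%N then
    rho k.-1 p * ppart (psi (sigma rho k)) * ppart (u (k%:R * dx) p)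
    + rho k p * ppart (psi (sigma rho k.-1)) * npart (u (k%:R * dx) p)
  else 0.

(* Main.v *)
Require Import Defs.
From HB Require Import structures.
From mathcomp Require Import all_boot all_order all_algebra.
From mathcomp Require Import all_classical all_reals all_analysis.
From mathcomp Require Import ring lra.
Import Order.TTheory GRing.Theory Num.Theory.
Local Open Scope ring_scope.

Lemma ppart_ge0 (R : realType) (x : R) : 0 <= ppart x.
Proof. by rewrite /ppart le_max lexx orbT. Qed.

Lemma npart_le0 (R : realType) (x : R) : npart x <= 0.
Proof. by rewrite /npart ge_min lexx orbT. Qed.

Theorem proposition3p4 (R : realType) (P M : nat) (L dt : R)
    (psi : R -> R) (alpha : R) (u : R -> 'I_P -> R)
    (rho_n rho_n1 : nat -> 'I_P -> R) :
  saturation psi alpha ->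
  0 < L -> (0 < M)%N -> 0 < dt ->
  (forall i : nat, (i < M)%N -> forall p : 'I_P, 0 <= rho_n i p) ->
  (forall i : nat, (i < M)%N -> sigma rho_n i <= alpha) ->
  (forall i : nat, (i < M)%N -> forall p : 'I_P,
     (rho_n1 i p - rho_n i p) / dt
     + (flux psi u (L / M%:R) M rho_n1 i.+1 p
        - flux psi u (L / M%:R) M rho_n1 i p) / (L / M%:R) = 0) ->
  (forall i : nat, (i < M)%N -> forall p : 'I_P, 0 <= rho_n1 i p) /\
  (forall i : nat, (i < M)%N -> sigma rho_n1 i <= alpha).
Proof.
move=> [_ _ alpha_gt0 _ psineg] L0 M0 dt0 rn0 sn Heq.
set dx := L / M%:R.
have dx0 : 0 < dx by rewrite divr_gt0 // ltr0n.
set lam := dt / dx.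
have lam0 : 0 < lam by rewrite divr_gt0.
set F := flux psi u dx M rho_n1.
have step : forall i, (i < M)%N -> forall p,
    rho_n1 i p = rho_n i p - lam * (F i.+1 p - F i p).
  move=> i iM p; have := Heq i iM p; rewrite -/dx -/F /lam => H.
  have dtn : dt != 0 by rewrite gt_eqF.
  have dxn : dx != 0 by rewrite gt_eqF.
  apply/eqP; rewrite -subr_eq0; apply/eqP.
  have -> : rho_n1 i p - (rho_n i p - dt / dx * (F i.+1 p - F i p)) =
     dt * ((rho_n1 i p - rho_n i p) / dt + (F i.+1 p - F i p) / dx).
    by field; rewrite dxn dtn.
  by rewrite H mulr0.
have part1 : forall i : nat, (i < M)%N -> forall p : 'I_P, 0 <= rho_n1 i p.
  move=> j jM p.
  pose s k : R := if rho_n1 k p < 0 then 1 else 0.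
  have keyA : forall k, (s k.-1 - s k) * F k p <= 0.
    move=> k; rewrite /F /flux; case: ifP => _; last by rewrite mulr0.
    rewrite -!mulrA.
    set A := ppart _ * ppart _; set B := ppart _ * npart _.
    have A0 : 0 <= A by rewrite mulr_ge0 // ppart_ge0.
    have B0 : B <= 0 by rewrite mulr_ge0_le0 // ?ppart_ge0 ?npart_le0.
    rewrite /s.
    case: ifP => Ha; case: ifP => Hb; rewrite ?subrr ?mul0r //.
    - rewrite subr0 mul1r.
      have h1 : rho_n1 k.-1 p * A <= 0 by rewrite nmulr_rle0 // ltW.
      have h2 : rho_n1 k p * B <= 0 by rewrite mulr_ge0_le0 // leNgt Hb.
      lra.
    - rewrite sub0r mulN1r oppr_le0; apply: addr_ge0.
        by rewrite mulr_ge0 // leNgt Ha.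
      by rewrite nmulr_rge0 // ltW.
  have F0 : F 0%N p = 0 by rewrite /F /flux.
  have FM : F M p = 0 by rewrite /F /flux ltnn andbF.
  have keyB : \sum_(0 <= i < M) s i * (F i.+1 p - F i p)
      = \sum_(0 <= k < M.+1) (s k.-1 - s k) * F k p.
    rewrite (eq_bigr (fun i => s i * F i.+1 p - s i * F i p));
      last by move=> i _; rewrite mulrBr.
    rewrite sumrB.
    rewrite [RHS](eq_bigr (fun k => s k.-1 * F k p - s k * F k p));
      last by move=> i _; rewrite mulrBl.
    rewrite sumrB big_nat_recl // big_nat_recr //= F0 FM !mulr0 add0r addr0.
    by [].
  have sum_le : \sum_(0 <= i < M) s i * (F i.+1 p - F i p) <= 0.
    by rewrite keyB; apply: sumr_le0 => k _; apply: keyA.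
  have sum_ge : 0 <= \sum_(0 <= i < M) s i * rho_n1 i p.
    rewrite big_nat_cond.
    rewrite (eq_bigr (fun i => s i * rho_n i p - lam * (s i * (F i.+1 p - F i p))));
      last first.
      move=> i; rewrite andbT => /andP[_ iM].
      by rewrite (step i iM) mulrBr mulrCA.
    rewrite sumrB -mulr_sumr -big_nat_cond subr_ge0.
    apply: (@le_trans _ _ 0).
      by rewrite pmulr_rle0 // -big_nat_cond.
    rewrite big_nat_cond; apply: sumr_ge0 => i; rewrite andbT => /andP[_ iM].
    by rewrite /s; case: ifP => _; rewrite ?mul1r ?mul0r ?rn0.
  rewrite leNgt; apply/negP => hneg.
  have Hnn : forall i : 'I_M, predT i -> 0 <= - (s i * rho_n1 i p).
    move=> i _; rewrite oppr_ge0 /s; case: ifP => h; rewrite ?mul0r //.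
    by rewrite mul1r ltW.
  have H0 : \sum_(i < M | predT i) - (s i * rho_n1 i p) = 0.
    apply/eqP; rewrite eq_le; apply/andP; split; last exact: sumr_ge0.
    rewrite sumrN oppr_le0 -(big_mkord predT (fun i => s i * rho_n1 i p)).
    exact: sum_ge.
  have := psumr_eq0P Hnn H0 (i := Ordinal jM) isT.
  by rewrite /= /s hneg mul1r => /eqP; rewrite oppr_eq0 lt_eqF.
split => // i iM.
rewrite leNgt; apply/negP => hgt.
have sige : 0 <= sigma rho_n1 i by apply: sumr_ge0 => p _; apply: part1.
have psin : psi (sigma rho_n1 i) < 0.
  have := psineg _ sige (negbT (gt_eqF hgt)).
  by rewrite nmulr_rgt0 // subr_lt0.
have pp0 : ppart (psi (sigma rho_n1 i)) = 0 by rewrite /ppart max_r // ltW.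
have : sigma rho_n1 i <= alpha.
  apply: (le_trans _ (sn i iM)); apply: ler_sum => p _.
  rewrite (step i iM p) lerBlDr lerDl; apply: mulr_ge0; first exact: ltW.
  rewrite subr_ge0; apply: (@le_trans _ _ 0).
    rewrite /F /flux; case: ifP => _ //.
    rewrite pp0 mulr0 mul0r add0r.
    rewrite mulr_ge0_le0 ?npart_le0 // mulr_ge0 ?ppart_ge0 //.
    exact: part1.
  rewrite /F /flux; case: ifP => // /andP[_ i1M].
  rewrite pp0 mulr0 mul0r addr0 /= mulr_ge0 ?ppart_ge0 // mulr_ge0 ?ppart_ge0 //.
  exact: part1.
by rewrite leNgt hgt.
Qed.
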